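(* Let $I=[a,b]$ be an interval with $|I|<1$, $\gamma>1$, and let $\mathcal{K}:I\to\mathbb{R}$ be continuous and such that there is $C_0>0$ with $|\mathcal{K}(\xi+\tau)+\mathcal{K}(\xi-\tau)-2\mathcal{K}(\xi)|\le C_0\tau\mathcal{Z}_\gamma(\tau)$ for all $\tau\in[0,|I|/2]$ and all $\xi$ with $\xi\pm\tau\in I$. Then $\mathcal{K}\in C^1(I)$, and there exists a constant $C>0$ such that for all $\xi,\eta\in I$, $$|\mathcal{K}'(\xi)-\mathcal{K}'(\eta)|\le C\,\mathcal{P}_\gamma(|\xi-\eta|).$$
   Context: $\mathcal{Z}_\gamma(x)=(\log\frac1x)^{-\gamma}$ for $x\in(0,1)$ and $\mathcal{Z}_\gamma(0)=0$. For $\gamma>1$, $\mathcal{P}_\gamma:(0,1)\to\mathbb{R}$ is $\mathcal{P}_\gamma(x)=\sum_{n=1}^\infty \mathcal{Z}_\gamma(x2^{-n})$, extended by $\mathcal{P}_\gamma(0)=0$. *)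

(* Defs.v *)
From Stdlib Require Import Reals Lra.
From Coquelicot Require Import Coquelicot.
Open Scope R_scope.

(* Z_gamma(x) = (log (1/x))^(-gamma) for x in (0,1), and 0 otherwise
   (the paper only uses x in [0,1); Z_gamma(0) = 0). *)
Definition Zg (gamma x : R) : R :=
  if Rlt_dec 0 x then
    (if Rlt_dec x 1 then Rpower (ln (1 / x)) (- gamma) else 0)
  else 0.

Definition Pg (gamma x : R) : R :=
  if Rlt_dec 0 x then Series (fun n : nat => Zg gamma (x / 2 ^ (S n))) else 0.

Definition Icc (a b x : R) : Prop := a <= x <= b.

Definition continuous_on_Icc (a b : R) (f : R -> R) : Prop :=
  forall x, Icc a b x ->
    filterlim f (within (Icc a b) (locally x)) (locally (f x)).

Definition has_derive_on_Icc (a b : R) (f : R -> R) (x l : R) : Prop :=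
  filterlim (fun y => (f y - f x) / (y - x))
    (within (fun y => Icc a b y /\ y <> x) (locally x)) (locally l).

(* Main.v *)
Require Import Defs.
From Stdlib Require Import Reals Lra Lia ZArith.
From Coquelicot Require Import Coquelicot.
Open Scope R_scope.

Lemma exp_le' x y : x <= y -> exp x <= exp y.
Proof. intros [H|H]; [left; apply exp_increasing; auto | subst; lra]. Qed.

Lemma pow2_ge1 k : 1 <= 2 ^ k.
Proof. induction k; simpl; lra. Qed.

Lemma ln_pos' x : 1 < x -> 0 < ln x.
Proof. intros; rewrite <- ln_1; apply ln_increasing; lra. Qed.

Lemma Zg_nonneg g x : 0 <= Zg g x.
Proof.
  unfold Zg, Rpower. destruct (Rlt_dec 0 x); [destruct (Rlt_dec x 1)|]; try lra.
  left; apply exp_pos.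
Qed.

Lemma Zg_val g t : 0 < t < 1 -> Zg g t = Rpower (ln (1/t)) (-g).
Proof.
  intros [H1 H2]. unfold Zg. destruct (Rlt_dec 0 t); [destruct (Rlt_dec t 1)|]; lra.
Qed.

Lemma ln_inv_pos t : 0 < t < 1 -> 0 < ln (1/t).
Proof.
  intros. apply ln_pos'. unfold Rdiv. rewrite Rmult_1_l.
  rewrite <- Rinv_1. apply Rinv_lt_contravar; lra.
Qed.

Lemma Zg_mono g s t : 0 < g -> 0 < s <= t -> t < 1 -> Zg g s <= Zg g t.
Proof.
  intros Hg Hs Ht. rewrite !Zg_val by lra. unfold Rpower. apply exp_le'.
  assert (0 < ln (1/t)) by (apply ln_inv_pos; lra).
  assert (ln (1/t) <= ln (1/s)).
  { apply ln_le. apply Rdiv_lt_0_compat; lra.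
    unfold Rdiv; rewrite !Rmult_1_l. apply Rinv_le_contravar; lra. }
  assert (ln (ln (1/t)) <= ln (ln (1/s))) by (apply ln_le; lra).
  nra.
Qed.

Lemma Zg_term g t n : 0 < t < 1 ->
  Zg g (t / 2 ^ n) = Rpower (ln (1/t) + INR n * ln 2) (-g).
Proof.
  intros Ht. assert (H2 := pow2_ge1 n). assert (0 < 2 ^ n) by lra.
  rewrite Zg_val.
  - f_equal. replace (1 / (t / 2 ^ n)) with (2 ^ n * (1/t)) by (field; lra).
    rewrite ln_mult, ln_pow; try lra. apply Rdiv_lt_0_compat; lra.
  - split. apply Rdiv_lt_0_compat; lra.
    apply Rle_lt_trans with t; [|lra].
    unfold Rdiv. rewrite <- (Rmult_1_r t) at 2. apply Rmult_le_compat_l; [lra|].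
    rewrite <- Rinv_1. apply Rinv_le_contravar; lra.
Qed.

Lemma telesc g A c : 1 < g -> 0 < A -> 0 < c ->
  Rpower (A + c) (-g) * (c * (g - 1)) <= Rpower A (1 - g) - Rpower (A + c) (1 - g).
Proof.
  intros Hg HA Hc. unfold Rpower. set (B := A + c).
  assert (HB : 0 < B) by (unfold B; lra).
  assert (E1 : exp ((1 - g) * ln A) = exp ((1 - g) * ln B) * exp ((1 - g) * (ln A - ln B))).
  { rewrite <- exp_plus. f_equal. ring. }
  assert (E2 : exp ((1 - g) * ln B) = exp (- g * ln B) * B).
  { rewrite <- (exp_ln B) at 3 by lra. rewrite <- exp_plus. f_equal. ring. }
  assert (I1 := exp_ineq1_le ((1 - g) * (ln A - ln B))).
  assert (I2 := exp_ineq1_le (ln (A / B))).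
  rewrite exp_ln in I2 by (apply Rdiv_lt_0_compat; lra).
  rewrite ln_div in I2 by lra.
  assert (I3 : (ln A - ln B) * B <= - c).
  { assert (A / B - 1 = - c / B) by (unfold B; field; lra).
    assert (ln A - ln B <= - c / B) by lra.
    apply Rmult_le_compat_r with (r := B) in H0; [|lra].
    replace (- c / B * B) with (- c) in H0 by (field; lra). lra. }
  rewrite E1, E2. set (e := exp (- g * ln B)).
  assert (0 < e) by apply exp_pos.
  assert (B * ((1 - g) * (ln A - ln B)) >= c * (g - 1)).
  { replace (B * ((1 - g) * (ln A - ln B))) with ((g - 1) * (- ((ln A - ln B) * B))) by ring.
    replace (c * (g - 1)) with ((g - 1) * c) by ring.
    apply Rle_ge, Rmult_le_compat_l; lra. }
  assert (e * B * ((1 - g) * (ln A - ln B)) >= e * (c * (g - 1))).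
  { rewrite Rmult_assoc. apply Rle_ge, Rmult_le_compat_l; lra. }
  assert (0 <= e * B * (exp ((1 - g) * (ln A - ln B)) - (1 + (1 - g) * (ln A - ln B)))).
  { apply Rmult_le_pos; [apply Rmult_le_pos|]; lra. }
  nra.
Qed.

Lemma nonneg_series_bound (a : nat -> R) M : (forall n, 0 <= a n) ->
  (forall N, sum_n a N <= M) -> ex_series a /\ Series a <= M.
Proof.
  intros Ha HM.
  assert (Hinc : forall n, sum_n a n <= sum_n a (S n)).
  { intros n. rewrite sum_Sn. unfold plus; simpl. specialize (Ha (S n)). lra. }
  destruct (ex_finite_lim_seq_incr _ M Hinc HM) as [l Hl].
  assert (Hs : is_series a l) by exact Hl.
  split. exists l; exact Hs.
  rewrite (is_series_unique _ _ Hs).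
  assert (H := is_lim_seq_le _ _ l M HM Hl (is_lim_seq_const M)). simpl in H. exact H.
Qed.

Lemma Pg_bound g t : 1 < g -> 0 < t < 1 ->
  ex_series (fun n => Zg g (t / 2 ^ (S n))) /\
  Pg g t <= Rpower (ln (1/t)) (1 - g) / (ln 2 * (g - 1)).
Proof.
  intros Hg Ht. set (L := ln (1/t)). set (c := ln 2).
  assert (HL : 0 < L) by (apply ln_inv_pos; lra).
  assert (Hc : 0 < c) by (unfold c; apply ln_pos'; lra).
  assert (Hk : 0 < c * (g - 1)) by (apply Rmult_lt_0_compat; lra).
  assert (Hpart : forall N, sum_n (fun n => Zg g (t / 2 ^ (S n))) N * (c * (g - 1))
       <= Rpower L (1 - g) - Rpower (L + INR (S N) * c) (1 - g)).
  { induction N.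
    - rewrite sum_O. rewrite Zg_term by lra. fold L c.
      pose proof (telesc g L c Hg HL Hc). simpl INR in *.
      replace (L + 1 * c) with (L + c) by ring. lra.
    - rewrite sum_Sn. unfold plus; simpl plus. rewrite Rmult_plus_distr_r.
      rewrite Zg_term by lra. fold L c.
      assert (HA : 0 < L + INR (S N) * c).
      { pose proof (pos_INR (S N)). nra. }
      pose proof (telesc g (L + INR (S N) * c) c Hg HA Hc).
      replace (L + INR (S (S N)) * c) with (L + INR (S N) * c + c)
        by (rewrite (S_INR (S N)); ring).
      lra. }
  assert (Hnn : forall n, 0 <= Zg g (t / 2 ^ (S n))) by (intros; apply Zg_nonneg).
  destruct (nonneg_series_bound _ (Rpower L (1 - g) / (c * (g - 1))) Hnn) as [Hex Hle].
  { intros N. specialize (Hpart N).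
    assert (0 < Rpower (L + INR (S N) * c) (1 - g)) by (unfold Rpower; apply exp_pos).
    apply Rmult_le_reg_r with (c * (g - 1)); auto.
    unfold Rdiv. rewrite Rmult_assoc, Rinv_l by lra. lra. }
  split; auto. unfold Pg. destruct (Rlt_dec 0 t); [|lra]. exact Hle.
Qed.

Lemma Pg_nonneg g t : 1 < g -> 0 <= t < 1 -> 0 <= Pg g t.
Proof.
  intros Hg Ht. unfold Pg. destruct (Rlt_dec 0 t); [|lra].
  destruct (Pg_bound g t Hg ltac:(lra)) as [Hex _].
  replace 0 with (Series (fun n => 0 * Zg g (t / 2 ^ (S n)))).
  - apply Series_le; auto. intros; split; [lra| rewrite Rmult_0_l; apply Zg_nonneg].
  - rewrite Series_scal_l; ring.
Qed.

Lemma P_small g : 1 < g -> forall eps, 0 < eps ->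
  exists d, 0 < d <= 1 /\ forall t, 0 < t < d -> Pg g t < eps.
Proof.
  intros Hg eps He. set (c := ln 2).
  assert (Hc : 0 < c) by (unfold c; apply ln_pos'; lra).
  assert (Hk : 0 < c * (g - 1)) by (apply Rmult_lt_0_compat; lra).
  set (e' := eps * (c * (g - 1))).
  assert (He' : 0 < e') by (apply Rmult_lt_0_compat; lra).
  set (M := exp (ln e' / (1 - g))).
  assert (HM : 0 < M) by apply exp_pos.
  exists (Rmin 1 (exp (- M))). split.
  { split; [apply Rmin_pos; [lra|apply exp_pos]| apply Rmin_l]. }
  intros t Ht.
  assert (Ht1 : t < 1) by (pose proof (Rmin_l 1 (exp (-M))); lra).
  assert (Ht2 : t < exp (- M)) by (pose proof (Rmin_r 1 (exp (-M))); lra).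
  destruct (Pg_bound g t Hg ltac:(lra)) as [_ Hb].
  assert (HL : M < ln (1 / t)).
  { rewrite <- (ln_exp M). apply ln_increasing; [apply exp_pos|].
    assert (exp M * exp (- M) = 1) by (rewrite <- exp_plus; replace (M + - M) with 0 by ring; apply exp_0).
    assert (0 < exp (-M)) by apply exp_pos.
    apply Rmult_lt_reg_r with t; [lra|].
    replace (1 / t * t) with 1 by (field; lra).
    apply Rlt_le_trans with (exp M * exp (-M)); [|lra].
    apply Rmult_lt_compat_l; [apply exp_pos|lra]. }
  assert (HF : Rpower (ln (1/t)) (1 - g) < e').
  { unfold Rpower. rewrite <- (exp_ln e') by lra. apply exp_increasing.
    assert (ln M < ln (ln (1/t))) by (apply ln_increasing; lra).
    unfold M in H. rewrite ln_exp in H.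
    assert (ln e' = (1 - g) * (ln e' / (1 - g))) by (field; lra).
    nra. }
  apply Rle_lt_trans with (1 := Hb). fold c.
  apply Rmult_lt_reg_r with (c * (g - 1)); auto.
  unfold Rdiv. rewrite Rmult_assoc, Rinv_l by lra. unfold e' in HF. lra.
Qed.

Lemma P_mono g s t : 1 < g -> 0 < s <= t -> t < 1 -> Pg g s <= Pg g t.
Proof.
  intros Hg Hs Ht. destruct (Pg_bound g t Hg ltac:(lra)) as [Hex _].
  unfold Pg. destruct (Rlt_dec 0 s); [|lra]. destruct (Rlt_dec 0 t); [|lra].
  apply Series_le; auto. intros n; split; [apply Zg_nonneg|].
  pose proof (pow2_ge1 (S n)).
  apply Zg_mono; try lra.
  - split. apply Rdiv_lt_0_compat; lra.
    unfold Rdiv; apply Rmult_le_compat_r; [left; apply Rinv_0_lt_compat; lra| lra].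
  - apply Rle_lt_trans with t; [|lra].
    unfold Rdiv. rewrite <- (Rmult_1_r t) at 2. apply Rmult_le_compat_l; [lra|].
    rewrite <- Rinv_1. apply Rinv_le_contravar; lra.
Qed.

Lemma Z_le_P g t : 1 < g -> 0 < t -> 2 * t < 1 -> Zg g t <= Pg g (2 * t).
Proof.
  intros Hg Ht Ht2. destruct (Pg_bound g (2 * t) Hg ltac:(lra)) as [Hex _].
  unfold Pg. destruct (Rlt_dec 0 (2 * t)); [|lra].
  rewrite Series_incr_1 by auto.
  replace (2 * t / 2 ^ 1) with t by (simpl; field).
  assert (0 <= Series (fun k => Zg g (2 * t / 2 ^ S (S k)))); [|lra].
  replace 0 with (Series (fun n => 0 * Zg g (2 * t / 2 ^ S (S n)))).
  - apply Series_le. intros; split; [lra| rewrite Rmult_0_l; apply Zg_nonneg].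
    apply (ex_series_incr_1 (fun n => Zg g (2 * t / 2 ^ S n))). auto.
  - rewrite Series_scal_l; ring.
Qed.

Lemma abs_le_eps u : (forall e, 0 < e -> Rabs u <= e) -> u = 0.
Proof.
  intros H. destruct (Req_dec u 0) as [|Hu]; auto.
  assert (0 < Rabs u) by (apply Rabs_pos_lt; auto).
  specialize (H (Rabs u / 2) ltac:(lra)). lra.
Qed.

Lemma small_pow c d : 0 < c -> 0 < d -> exists n, c / 2 ^ n < d.
Proof.
  intros Hc Hd. destruct (pow_lt_1_zero (/ 2) ltac:(rewrite Rabs_pos_eq; lra) (d / c)
    ltac:(apply Rdiv_lt_0_compat; lra)) as [N HN].
  exists N. specialize (HN N (le_n N)). rewrite Rabs_pos_eq in HN
    by (apply pow_le; lra). rewrite pow_inv in HN.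
  pose proof (pow2_ge1 N).
  apply Rmult_lt_reg_r with (/ c); [apply Rinv_0_lt_compat; lra|].
  replace (c / 2 ^ N * / c) with (/ 2 ^ N) by (field; lra). exact HN.
Qed.

Lemma floor_nat r : 0 <= r -> exists p : nat, INR p <= r < INR p + 1.
Proof.
  intros Hr. destruct (archimed r) as [H1 H2].
  assert (Hz : (0 < up r)%Z) by (apply lt_0_IZR; lra).
  exists (Z.to_nat (up r - 1)).
  rewrite INR_IZR_INZ, Z2Nat.id by lia. rewrite minus_IZR. simpl. lra.
Qed.

Lemma cont_eps a b (K : R -> R) y0 : continuous_on_Icc a b K -> Icc a b y0 ->
  forall e, 0 < e -> exists d, 0 < d /\
    forall y, Icc a b y -> Rabs (y - y0) < d -> Rabs (K y - K y0) < e.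
Proof.
  intros HK Hy0 e He. specialize (HK y0 Hy0).
  destruct (proj1 (filterlim_locally _ _) HK (mkposreal e He)) as [d Hd].
  exists d. split; [apply cond_pos|]. intros y Hy Hyd.
  specialize (Hd y). unfold ball in Hd; simpl in Hd;
  unfold AbsRing_ball, abs, minus, plus, opp in Hd; simpl in Hd.
  apply Hd; auto.
Qed.

Lemma conv a b x h l : Icc a b x -> Icc a b (x + h) -> 0 <= l <= 1 -> Icc a b (x + l * h).
Proof.
  unfold Icc. intros H1 H2 H3. destruct (Rle_dec 0 h); split; nra.
Qed.

Definition SD a b g (K : R -> R) C0 := forall tau xi : R, 0 <= tau <= (b - a) / 2 ->
       Icc a b (xi + tau) -> Icc a b (xi - tau) ->
       Rabs (K (xi + tau) + K (xi - tau) - 2 * K xi) <= C0 * tau * Zg g tau.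

Definition Dq (K : R -> R) x h := (K (x + h) - K x) / h.

Lemma sd_abs a b g K C0 : SD a b g K C0 -> forall xi tau,
  Icc a b (xi + tau) -> Icc a b (xi - tau) ->
  Rabs (K (xi + tau) + K (xi - tau) - 2 * K xi) <= C0 * Rabs tau * Zg g (Rabs tau).
Proof.
  intros H xi tau H1 H2. unfold Icc in *. destruct (Rle_dec 0 tau).
  - rewrite (Rabs_pos_eq tau) by lra. apply H; unfold Icc; lra.
  - rewrite (Rabs_left tau) by lra. specialize (H (- tau) xi ltac:(lra)).
    replace (xi + - tau) with (xi - tau) in H by ring.
    replace (xi - - tau) with (xi + tau) in H by ring.
    replace (K (xi + tau) + K (xi - tau)) with (K (xi - tau) + K (xi + tau)) by ring.
    apply H; unfold Icc; lra.
Qed.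

Lemma half_est a b g K C0 x h : SD a b g K C0 -> Icc a b x -> Icc a b (x + h) -> h <> 0 ->
  Rabs (Dq K x h - Dq K x (h / 2)) <= C0 / 2 * Zg g (Rabs h / 2).
Proof.
  intros H Hx Hxh Hh.
  assert (E : Dq K x h - Dq K x (h / 2) =
     (K (x + h) + K x - 2 * K (x + h / 2)) / h).
  { unfold Dq. field; auto. }
  rewrite E. assert (Hs := sd_abs a b g K C0 H (x + h / 2) (h / 2)).
  replace (x + h / 2 + h / 2) with (x + h) in Hs by field.
  replace (x + h / 2 - h / 2) with x in Hs by field.
  specialize (Hs Hxh Hx).
  replace (Rabs (h / 2)) with (Rabs h / 2) in Hs
    by (unfold Rdiv; rewrite Rabs_mult, (Rabs_pos_eq (/ 2)) by lra; auto).
  unfold Rdiv at 1. rewrite Rabs_mult, Rabs_inv.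
  assert (0 < Rabs h) by (apply Rabs_pos_lt; auto).
  apply Rmult_le_reg_r with (Rabs h); auto.
  rewrite Rmult_assoc, Rinv_l by lra. rewrite Rmult_1_r.
  replace (C0 / 2 * Zg g (Rabs h / 2) * Rabs h) with (C0 * (Rabs h / 2) * Zg g (Rabs h / 2)) by field.
  exact Hs.
Qed.

Definition Lq (K : R -> R) x h :=
  Dq K x h - Series (fun k => Dq K x (h / 2 ^ k) - Dq K x (h / 2 ^ S k)).

Lemma pow_pos2 k : 0 < 2 ^ k.
Proof. pose proof (pow2_ge1 k); lra. Qed.

Lemma Icc_div a b x h k : Icc a b x -> Icc a b (x + h) -> Icc a b (x + h / 2 ^ k).
Proof.
  intros. replace (h / 2 ^ k) with (/ 2 ^ k * h) by (field; pose proof (pow_pos2 k); lra).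
  apply (conv a b); auto. pose proof (pow2_ge1 k). split.
  left; apply Rinv_0_lt_compat; lra. rewrite <- Rinv_1; apply Rinv_le_contravar; lra.
Qed.

Lemma Rabs_div2k h k : Rabs (h / 2 ^ k) = Rabs h / 2 ^ k.
Proof.
  unfold Rdiv. rewrite Rabs_mult, Rabs_inv, (Rabs_pos_eq (2 ^ k)); auto.
  left; apply pow_pos2.
Qed.

Lemma diff_est a b g K C0 x h k : SD a b g K C0 -> Icc a b x -> Icc a b (x + h) -> h <> 0 ->
  Rabs (Dq K x (h / 2 ^ k) - Dq K x (h / 2 ^ S k)) <= C0 / 2 * Zg g (Rabs h / 2 ^ S k).
Proof.
  intros H Hx Hxh Hh. pose proof (pow_pos2 k).
  replace (h / 2 ^ S k) with (h / 2 ^ k / 2) by (simpl; field; lra).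
  replace (Rabs h / 2 ^ S k) with (Rabs (h / 2 ^ k) / 2) by (rewrite Rabs_div2k; simpl; field; lra).
  apply (half_est a b g K C0); auto. apply Icc_div; auto.
  intro E; apply Hh; replace h with (h / 2 ^ k * 2 ^ k) by (field; lra); rewrite E; ring.
Qed.

Lemma L_bound a b g K C0 x h : 1 < g -> 0 < C0 -> b - a < 1 -> SD a b g K C0 ->
  Icc a b x -> Icc a b (x + h) -> h <> 0 ->
  Rabs (Dq K x h - Lq K x h) <= C0 / 2 * Pg g (Rabs h).
Proof.
  intros Hg HC Hba H Hx Hxh Hh.
  assert (Hh0 : 0 < Rabs h) by (apply Rabs_pos_lt; auto).
  assert (Hh1 : Rabs h < 1) by (unfold Icc in *; apply Rabs_def1; lra).
  destruct (Pg_bound g (Rabs h) Hg ltac:(lra)) as [Hex _].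
  set (d := fun k => Dq K x (h / 2 ^ k) - Dq K x (h / 2 ^ S k)).
  assert (Hb : forall k, Rabs (d k) <= C0 / 2 * Zg g (Rabs h / 2 ^ S k))
    by (intros; apply (diff_est a b g K C0); auto).
  assert (Hex2 : ex_series (fun k => C0 / 2 * Zg g (Rabs h / 2 ^ S k)))
    by (apply (ex_series_scal_l (C0 / 2) _ Hex)).
  assert (Hexa : ex_series (fun k => Rabs (d k))).
  { apply (@ex_series_le R_AbsRing R_CompleteNormedModule _ (fun k => C0 / 2 * Zg g (Rabs h / 2 ^ S k))); [|exact Hex2]. intros n. change (Rabs (Rabs (d n)) <= C0 / 2 * Zg g (Rabs h / 2 ^ S n)).
    rewrite Rabs_Rabsolu; auto. }
  unfold Lq. fold d. replace (Dq K x h - (Dq K x h - Series d)) with (Series d) by ring.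
  eapply Rle_trans. apply Series_Rabs; auto.
  unfold Pg. destruct (Rlt_dec 0 (Rabs h)); [|lra]. rewrite <- Series_scal_l.
  apply Series_le; auto. intros n; split; [apply Rabs_pos| auto].
Qed.

Lemma d_ex a b g K C0 x h : 1 < g -> b - a < 1 -> SD a b g K C0 ->
  Icc a b x -> Icc a b (x + h) -> h <> 0 ->
  ex_series (fun k => Dq K x (h / 2 ^ k) - Dq K x (h / 2 ^ S k)).
Proof.
  intros Hg Hba H Hx Hxh Hh.
  assert (Hh0 : 0 < Rabs h) by (apply Rabs_pos_lt; auto).
  assert (Hh1 : Rabs h < 1) by (unfold Icc in *; apply Rabs_def1; lra).
  destruct (Pg_bound g (Rabs h) Hg ltac:(lra)) as [Hex _].
  apply ex_series_Rabs.
  apply (@ex_series_le R_AbsRing R_CompleteNormedModule _ (fun k => C0 / 2 * Zg g (Rabs h / 2 ^ S k))).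
  - intros n. change (Rabs (Rabs (Dq K x (h / 2 ^ n) - Dq K x (h / 2 ^ S n))) <= C0 / 2 * Zg g (Rabs h / 2 ^ S n)).
    rewrite Rabs_Rabsolu. apply (diff_est a b g K C0); auto.
  - apply (ex_series_scal_l (C0 / 2) _ Hex).
Qed.

Lemma L_half a b g K C0 x h : 1 < g -> b - a < 1 -> SD a b g K C0 ->
  Icc a b x -> Icc a b (x + h) -> h <> 0 ->
  Lq K x (h / 2) = Lq K x h.
Proof.
  intros Hg Hba H Hx Hxh Hh. unfold Lq at 2.
  rewrite Series_incr_1 by (apply (d_ex a b g K C0); auto).
  replace (h / 2 ^ 0) with h by (simpl; field).
  replace (h / 2 ^ 1) with (h / 2) by (simpl; field).
  unfold Lq.
  rewrite (Series_ext (fun k => Dq K x (h / 2 ^ S k) - Dq K x (h / 2 ^ S (S k)))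
             (fun k => Dq K x (h / 2 / 2 ^ k) - Dq K x (h / 2 / 2 ^ S k))).
  - ring.
  - intros n. pose proof (pow_pos2 n).
    replace (h / 2 ^ S n) with (h / 2 / 2 ^ n) by (simpl; field; lra).
    replace (h / 2 ^ S (S n)) with (h / 2 / 2 ^ S n) by (simpl; field; lra). reflexivity.
Qed.

Lemma div2k_nz h k : h <> 0 -> h / 2 ^ k <> 0.
Proof.
  intros Hh E; apply Hh; pose proof (pow_pos2 k).
  replace h with (h / 2 ^ k * 2 ^ k) by (field; lra); rewrite E; ring.
Qed.

Lemma L_pow a b g K C0 x h n : 1 < g -> b - a < 1 -> SD a b g K C0 ->
  Icc a b x -> Icc a b (x + h) -> h <> 0 ->
  Lq K x (h / 2 ^ n) = Lq K x h.
Proof.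
  intros Hg Hba H Hx Hxh Hh. induction n.
  - replace (h / 2 ^ 0) with h by (simpl; field). auto.
  - rewrite <- IHn. pose proof (pow_pos2 n).
    replace (h / 2 ^ S n) with (h / 2 ^ n / 2) by (simpl; field; lra).
    apply (L_half a b g K C0); auto. apply Icc_div; auto. apply div2k_nz; auto.
Qed.

Lemma icc_j a b x h m j : Icc a b x -> Icc a b (x + INR m * h) -> (j <= m)%nat ->
  Icc a b (x + INR j * h).
Proof.
  intros Hx Hm Hj. destruct m.
  - assert (j = 0%nat) by lia. subst. simpl. replace (x + 0 * h) with x by ring. auto.
  - assert (0 < INR (S m)) by (apply lt_0_INR; lia).
    replace (x + INR j * h) with (x + (INR j / INR (S m)) * (INR (S m) * h)) by (field; lra).
    apply (conv a b); auto. split.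
    + apply Rdiv_le_0_compat; [apply pos_INR | lra].
    + apply le_INR in Hj. apply Rmult_le_reg_r with (INR (S m)); auto.
      unfold Rdiv. rewrite Rmult_assoc, Rinv_l by lra. lra.
Qed.

Lemma mult_est a b g K C0 x h m : 0 < C0 -> SD a b g K C0 -> Icc a b x -> Icc a b (x + INR m * h) ->
  (1 <= m)%nat -> h <> 0 ->
  Rabs (Dq K x (INR m * h) - Dq K x h) <= INR m * C0 * Zg g (Rabs h).
Proof.
  intros HC H Hx Hm Hm1 Hh.
  set (B := C0 * Rabs h * Zg g (Rabs h)).
  set (Dl := fun j => K (x + INR (S j) * h) - K (x + INR j * h)).
  assert (Hd : forall j, (S j <= m)%nat -> Rabs (Dl j - Dl 0%nat) <= INR j * B).
  { induction j; intros Hj.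
    - simpl. unfold Rminus at 1. rewrite Rplus_opp_r, Rabs_R0. lra.
    - assert (Hs := sd_abs a b g K C0 H (x + INR (S j) * h) h).
      replace (x + INR (S j) * h + h) with (x + INR (S (S j)) * h) in Hs
        by (rewrite (S_INR (S j)); ring).
      replace (x + INR (S j) * h - h) with (x + INR j * h) in Hs
        by (rewrite (S_INR j); ring).
      specialize (Hs (icc_j a b x h m (S (S j)) Hx Hm Hj) (icc_j a b x h m j Hx Hm ltac:(lia))).
      specialize (IHj ltac:(lia)).
      assert (E : Dl (S j) - Dl 0%nat = (Dl j - Dl 0%nat) +
        (K (x + INR (S (S j)) * h) + K (x + INR j * h) - 2 * K (x + INR (S j) * h)))
        by (unfold Dl; ring).
      rewrite E. eapply Rle_trans; [apply Rabs_triang|].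
      replace (INR (S j) * B) with (INR j * B + B) by (rewrite S_INR; ring). fold B in Hs. lra. }
  assert (HB : 0 <= B) by (unfold B; pose proof (Rabs_pos h); pose proof (Zg_nonneg g (Rabs h));
                             apply Rmult_le_pos; [apply Rmult_le_pos|]; lra).
  assert (HE : forall j, (j <= m)%nat ->
     Rabs (K (x + INR j * h) - K x - INR j * Dl 0%nat) <= INR j * INR j * B).
  { induction j; intros Hj.
    - simpl. replace (x + 0 * h) with x by ring.
      replace (K x - K x - 0 * Dl 0%nat) with 0 by ring. rewrite Rabs_R0. lra.
    - specialize (IHj ltac:(lia)). specialize (Hd j Hj).
      assert (E : K (x + INR (S j) * h) - K x - INR (S j) * Dl 0%nat =
        (K (x + INR j * h) - K x - INR j * Dl 0%nat) + (Dl j - Dl 0%nat))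
        by (unfold Dl; rewrite (S_INR j); ring).
      rewrite E. eapply Rle_trans; [apply Rabs_triang|].
      rewrite (S_INR j). pose proof (pos_INR j). nra. }
  specialize (HE m (le_n m)).
  assert (Hmp : 0 < INR m) by (apply lt_0_INR; lia).
  assert (Hh0 : 0 < Rabs h) by (apply Rabs_pos_lt; auto).
  assert (E : Dq K x (INR m * h) - Dq K x h =
     (K (x + INR m * h) - K x - INR m * Dl 0%nat) / (INR m * h)).
  { unfold Dq, Dl. simpl INR. replace (x + 1 * h) with (x + h) by ring.
    replace (x + 0 * h) with x by ring. field. split; auto; lra. }
  rewrite E. unfold Rdiv. rewrite Rabs_mult, Rabs_inv, Rabs_mult, (Rabs_pos_eq (INR m)) by lra.
  apply Rmult_le_reg_r with (INR m * Rabs h); [apply Rmult_lt_0_compat; lra|].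
  rewrite Rmult_assoc, Rinv_l by (apply Rmult_integral_contrapositive; split; lra).
  unfold B in HE. nra.
Qed.

Lemma L_mult a b g K C0 x h m : 1 < g -> 0 < C0 -> b - a < 1 -> SD a b g K C0 ->
  Icc a b x -> Icc a b (x + INR m * h) -> (1 <= m)%nat -> h <> 0 ->
  Lq K x (INR m * h) = Lq K x h.
Proof.
  intros Hg HC Hba H Hx Hm Hm1 Hh.
  assert (Hmp : 1 <= INR m) by (apply (le_INR 1); lia).
  assert (Hxh : Icc a b (x + h)).
  { pose proof (icc_j a b x h m 1 Hx Hm Hm1) as Hi. simpl INR in Hi.
    replace (x + 1 * h) with (x + h) in Hi by ring. exact Hi. }
  assert (Hmh : INR m * h <> 0) by (apply Rmult_integral_contrapositive; split; lra).
  apply Rminus_diag_uniq. apply abs_le_eps. intros e He.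
  set (e1 := e / (C0 * (INR m + 1))).
  assert (He1 : 0 < e1) by (apply Rdiv_lt_0_compat; [lra| apply Rmult_lt_0_compat; lra]).
  destruct (P_small g Hg e1 He1) as [d [Hd HP]].
  assert (Hh0 : 0 < Rabs h) by (apply Rabs_pos_lt; auto).
  destruct (small_pow (2 * INR m * Rabs h) d ltac:(nra) ltac:(lra)) as [n Hn].
  pose proof (pow_pos2 n).
  set (u := h / 2 ^ n).
  assert (Hu : u <> 0) by (apply div2k_nz; auto).
  assert (Hau : Rabs u = Rabs h / 2 ^ n) by apply Rabs_div2k.
  assert (Hu0 : 0 < Rabs u) by (apply Rabs_pos_lt; auto).
  assert (Hsm : 2 * INR m * Rabs u < d).
  { rewrite Hau. replace (2 * INR m * (Rabs h / 2 ^ n)) with (2 * INR m * Rabs h / 2 ^ n) by (field; lra). auto. }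
  assert (Hmu : INR m * h / 2 ^ n = INR m * u) by (unfold u; field; lra).
  assert (Hxmu : Icc a b (x + INR m * u)) by (rewrite <- Hmu; apply Icc_div; auto).
  assert (Hxu : Icc a b (x + u)) by (unfold u; apply Icc_div; auto).
  assert (Hmu0 : INR m * u <> 0) by (apply Rmult_integral_contrapositive; split; lra).
  rewrite <- (L_pow a b g K C0 x (INR m * h) n) by auto.
  rewrite <- (L_pow a b g K C0 x h n) by auto.
  rewrite Hmu. fold u.
  pose proof (L_bound a b g K C0 x (INR m * u) Hg HC Hba H Hx Hxmu Hmu0) as B1.
  pose proof (L_bound a b g K C0 x u Hg HC Hba H Hx Hxu Hu) as B2.
  pose proof (mult_est a b g K C0 x u m HC H Hx Hxmu Hm1 Hu) as B3.
  rewrite Rabs_mult, (Rabs_pos_eq (INR m)) in B1 by lra.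
  assert (P1 : Pg g (INR m * Rabs u) < e1) by (apply HP; split; nra).
  assert (P2 : Pg g (Rabs u) < e1) by (apply HP; split; nra).
  assert (P3 : Zg g (Rabs u) < e1).
  { eapply Rle_lt_trans. apply Z_le_P; auto; nra. apply HP; split; nra. }
  assert (Ee : C0 * (INR m + 1) * e1 = e) by (unfold e1; field; split; lra).
  assert (T : Lq K x (INR m * u) - Lq K x u =
     - (Dq K x (INR m * u) - Lq K x (INR m * u)) + (Dq K x (INR m * u) - Dq K x u)
     + (Dq K x u - Lq K x u)) by ring.
  rewrite T.
  eapply Rle_trans; [apply Rabs_triang|].
  eapply Rle_trans; [apply Rplus_le_compat_r; apply Rabs_triang|].
  rewrite Rabs_Ropp.
  assert (C0 / 2 * Pg g (INR m * Rabs u) <= C0 / 2 * e1) by (apply Rmult_le_compat_l; lra).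
  assert (C0 / 2 * Pg g (Rabs u) <= C0 / 2 * e1) by (apply Rmult_le_compat_l; lra).
  assert (INR m * C0 * Zg g (Rabs u) <= INR m * C0 * e1) by (apply Rmult_le_compat_l; nra).
  nra.
Qed.

Lemma key_same a b g K C0 x h t : 1 < g -> 0 < C0 -> b - a < 1 -> SD a b g K C0 ->
  continuous_on_Icc a b K ->
  Icc a b x -> Icc a b (x + h) -> h <> 0 -> Icc a b (x + t) -> 0 < t * h ->
  Rabs (K (x + t) - K x - t * Lq K x h) <= C0 / 2 * Rabs t * Pg g (Rabs t).
Proof.
  intros Hg HC Hba H HK Hx Hxh Hh Hxt Hth.
  assert (Ht1 : Rabs t < 1) by (unfold Icc in *; apply Rabs_def1; lra).
  assert (Ht0 : t <> 0) by (intro; subst; lra).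
  assert (Hat : 0 < Rabs t) by (apply Rabs_pos_lt; auto).
  assert (HPt : 0 <= Pg g (Rabs t)) by (apply Pg_nonneg; auto; split; lra).
  apply Rle_plus_epsilon. intros e He.
  set (Lh := Lq K x h).
  destruct (cont_eps a b K (x + t) HK Hxt (e / 2) ltac:(lra)) as [d1 [Hd1 Hc]].
  assert (HL0 := Rabs_pos Lh).
  set (dl := Rmin d1 (e / (2 * (Rabs Lh + 1)))).
  assert (Hdl : 0 < dl) by (apply Rmin_pos; auto; apply Rdiv_lt_0_compat; lra).
  assert (Hh0 : 0 < Rabs h) by (apply Rabs_pos_lt; auto).
  destruct (small_pow (Rabs h) dl Hh0 Hdl) as [n Hn].
  pose proof (pow_pos2 n).
  set (u := h / 2 ^ n).
  assert (Hu : u <> 0) by (apply div2k_nz; auto).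
  assert (Hau : Rabs u < dl) by (unfold u; rewrite Rabs_div2k; auto).
  assert (Hud1 : Rabs u < d1) by (pose proof (Rmin_l d1 (e / (2 * (Rabs Lh + 1)))); fold dl in H1; lra).
  assert (Hue : Rabs u * Rabs Lh <= e / 2).
  { pose proof (Rmin_r d1 (e / (2 * (Rabs Lh + 1)))). fold dl in H1.
    assert (Rabs u * (Rabs Lh + 1) <= e / 2).
    { apply Rle_trans with (e / (2 * (Rabs Lh + 1)) * (Rabs Lh + 1)).
      apply Rmult_le_compat_r; lra. right; field; lra. }
    pose proof (Rabs_pos u). nra. }
  set (r := t / u).
  assert (Hr : 0 < r).
  { unfold r, u. replace (t / (h / 2 ^ n)) with (t * h * 2 ^ n / (h * h)) by (field; lra).
    apply Rdiv_lt_0_compat. apply Rmult_lt_0_compat; lra.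
    assert (0 < h * h) by (destruct (Rlt_dec 0 h); nra). lra. }
  destruct (floor_nat r ltac:(lra)) as [p [Hp1 Hp2]].
  set (t' := INR p * u).
  assert (Htr : t = r * u) by (unfold r; field; auto).
  assert (Htt : t' = (INR p / r) * t) by (unfold t'; rewrite Htr; field; lra).
  assert (Hlam : 0 <= INR p / r <= 1).
  { split. apply Rdiv_le_0_compat; [apply pos_INR|lra].
    apply Rmult_le_reg_r with r; auto. unfold Rdiv. rewrite Rmult_assoc, Rinv_l by lra. lra. }
  assert (Hxt' : Icc a b (x + t')) by (rewrite Htt; apply (conv a b); auto).
  assert (Hdiff : Rabs (t - t') < Rabs u).
  { replace (t - t') with ((r - INR p) * u) by (unfold t'; rewrite Htr; ring).
    rewrite Rabs_mult, (Rabs_pos_eq (r - INR p)) by lra.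
    assert (r - INR p < 1) by lra. assert (0 < Rabs u) by (apply Rabs_pos_lt; auto). nra. }
  assert (Hatt : Rabs t' <= Rabs t).
  { rewrite Htt, Rabs_mult, (Rabs_pos_eq (INR p / r)) by lra. nra. }
  assert (Claim : Rabs (K (x + t') - K x - t' * Lh) <= C0 / 2 * Rabs t * Pg g (Rabs t)).
  { destruct p as [|p'].
    - unfold t'. simpl INR. replace (x + 0 * u) with x by ring.
      replace (K x - K x - 0 * u * Lh) with 0 by ring. rewrite Rabs_R0.
      apply Rmult_le_pos; [|auto]. apply Rmult_le_pos; lra.
    - set (p := S p') in *.
      assert (Hp : (1 <= p)%nat) by (unfold p; lia).
      assert (HpR : 1 <= INR p) by (apply (le_INR 1); lia).
      assert (Ht'0 : t' <> 0) by (unfold t'; apply Rmult_integral_contrapositive; split; lra).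
      assert (Hxu : Icc a b (x + u)) by (unfold u; apply Icc_div; auto).
      assert (EL : Lh = Lq K x t').
      { unfold Lh, t'. rewrite (L_mult a b g K C0 x u p) by auto. unfold u.
        rewrite (L_pow a b g K C0 x h n) by auto. reflexivity. }
      pose proof (L_bound a b g K C0 x t' Hg HC Hba H Hx Hxt' Ht'0) as B.
      rewrite <- EL in B.
      assert (E : K (x + t') - K x - t' * Lh = t' * (Dq K x t' - Lh)) by (unfold Dq; field; auto).
      rewrite E, Rabs_mult.
      assert (Ha' : 0 < Rabs t') by (apply Rabs_pos_lt; auto).
      assert (Pg g (Rabs t') <= Pg g (Rabs t)) by (apply P_mono; auto; lra).
      assert (0 <= Pg g (Rabs t')) by (apply Pg_nonneg; auto; lra).
      apply Rle_trans with (Rabs t' * (C0 / 2 * Pg g (Rabs t'))).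
      apply Rmult_le_compat_l; lra.
      assert (Rabs t' * Pg g (Rabs t') <= Rabs t * Pg g (Rabs t)).
      { apply Rmult_le_compat; lra. }
      nra. }
  assert (Hk : Rabs (K (x + t') - K (x + t)) < e / 2).
  { apply Hc; auto. replace (x + t' - (x + t)) with (- (t - t')) by ring.
    rewrite Rabs_Ropp. lra. }
  assert (E : K (x + t) - K x - t * Lh =
     - (K (x + t') - K (x + t)) + (K (x + t') - K x - t' * Lh) - (t - t') * Lh) by ring.
  rewrite E.
  eapply Rle_trans; [apply Rabs_triang|]. rewrite Rabs_Ropp, Rabs_mult.
  eapply Rle_trans; [apply Rplus_le_compat_r; apply Rabs_triang|]. rewrite Rabs_Ropp.
  assert (Rabs (t - t') * Rabs Lh <= Rabs u * Rabs Lh) by (apply Rmult_le_compat_r; lra).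
  lra.
Qed.

Lemma Rabs_sub_le u w : Rabs (u - w) <= Rabs u + Rabs w.
Proof. unfold Rminus. rewrite <- (Rabs_Ropp w). apply Rabs_triang. Qed.

Lemma cross a b g K C0 x h h' : 1 < g -> 0 < C0 -> b - a < 1 -> SD a b g K C0 ->
  continuous_on_Icc a b K ->
  Icc a b x -> Icc a b (x + h) -> Icc a b (x + h') -> 0 < h -> h' < 0 ->
  Lq K x h = Lq K x h'.
Proof.
  intros Hg HC Hba H HK Hx Hxh Hxh' Hh Hh'.
  apply Rminus_diag_uniq. apply abs_le_eps. intros e He.
  set (e1 := e / (2 * C0)).
  assert (He1 : 0 < e1) by (apply Rdiv_lt_0_compat; lra).
  destruct (P_small g Hg e1 He1) as [d [Hd HP]].
  set (m := Rmin (Rmin h (- h')) d).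
  assert (Hm : 0 < m) by (apply Rmin_pos; [apply Rmin_pos|]; lra).
  assert (Hm1 : m <= h) by (pose proof (Rmin_l (Rmin h (-h')) d); pose proof (Rmin_l h (-h')); unfold m; lra).
  assert (Hm2 : m <= - h') by (pose proof (Rmin_l (Rmin h (-h')) d); pose proof (Rmin_r h (-h')); unfold m; lra).
  assert (Hm3 : m <= d) by (apply Rmin_r).
  set (tau := m / 4).
  assert (Ht0 : 0 < tau) by (unfold tau; lra).
  assert (Hxp : Icc a b (x + tau)).
  { replace (x + tau) with (x + (tau / h) * h) by (field; lra). apply (conv a b); auto.
    split. apply Rdiv_le_0_compat; lra.
    apply Rmult_le_reg_r with h; auto. unfold Rdiv. rewrite Rmult_assoc, Rinv_l by lra. unfold tau. lra. }
  assert (Hxm : Icc a b (x + - tau)).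
  { replace (x + - tau) with (x + (tau / (- h')) * h') by (field; lra). apply (conv a b); auto.
    split. apply Rdiv_le_0_compat; lra.
    apply Rmult_le_reg_r with (- h'); [lra|]. unfold Rdiv. rewrite Rmult_assoc, Rinv_l by lra. unfold tau. lra. }
  pose proof (key_same a b g K C0 x h tau Hg HC Hba H HK Hx Hxh ltac:(lra) Hxp ltac:(nra)) as A1.
  pose proof (key_same a b g K C0 x h' (- tau) Hg HC Hba H HK Hx Hxh' ltac:(lra) Hxm ltac:(nra)) as A2.
  pose proof (sd_abs a b g K C0 H x tau Hxp ltac:(replace (x - tau) with (x + - tau) by ring; exact Hxm)) as A3.
  rewrite Rabs_Ropp in A2. rewrite (Rabs_pos_eq tau) in A1, A2, A3 by lra.
  replace (x + - tau) with (x - tau) in A2 by ring.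
  assert (P1 : Pg g tau < e1) by (apply HP; unfold tau; lra).
  assert (P2 : Zg g tau < e1).
  { eapply Rle_lt_trans. apply Z_le_P; auto; unfold tau; lra. apply HP; unfold tau; lra. }
  set (L1 := Lq K x h) in *. set (L2 := Lq K x h') in *.
  assert (E : tau * (L1 - L2) = (K (x + tau) + K (x - tau) - 2 * K x)
      - (K (x + tau) - K x - tau * L1) - (K (x - tau) - K x - - tau * L2)) by ring.
  assert (Hb : tau * Rabs (L1 - L2) <= tau * (C0 * (Zg g tau + Pg g tau))).
  { rewrite <- (Rabs_pos_eq tau) at 1 by lra. rewrite <- Rabs_mult, E.
    eapply Rle_trans; [apply Rabs_sub_le|].
    eapply Rle_trans; [apply Rplus_le_compat_r; apply Rabs_sub_le|].
    lra. }
  apply Rmult_le_reg_l in Hb; auto.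
  assert (Ee : C0 * (e1 + e1) = e) by (unfold e1; field; lra).
  assert (C0 * (Zg g tau + Pg g tau) <= C0 * (e1 + e1)) by (apply Rmult_le_compat_l; lra).
  lra.
Qed.

Definition Gf a b (K : R -> R) x :=
  if Rle_dec x ((a + b) / 2) then Lq K x ((b - a) / 2) else Lq K x (- ((b - a) / 2)).

Lemma key_all a b g K C0 x t : a < b -> 1 < g -> 0 < C0 -> b - a < 1 -> SD a b g K C0 ->
  continuous_on_Icc a b K ->
  Icc a b x -> Icc a b (x + t) -> t <> 0 ->
  Rabs (K (x + t) - K x - t * Gf a b K x) <= C0 / 2 * Rabs t * Pg g (Rabs t).
Proof.
  intros Hab Hg HC Hba H HK Hx Hxt Ht. unfold Gf. destruct (Rle_dec x ((a + b) / 2)) as [Hm|Hm].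
  - assert (Hr : Icc a b (x + (b - a) / 2)) by (unfold Icc in *; lra).
    destruct (Rlt_dec 0 t).
    + apply (key_same a b g K C0 x); auto; try lra. nra.
    + rewrite (cross a b g K C0 x ((b - a) / 2) t); auto; try lra.
      apply (key_same a b g K C0 x); auto. nra.
  - assert (Hr : Icc a b (x + - ((b - a) / 2))) by (unfold Icc in *; lra).
    destruct (Rlt_dec 0 t).
    + rewrite <- (cross a b g K C0 x t (- ((b - a) / 2))); auto; try lra.
      apply (key_same a b g K C0 x); auto. nra.
    + apply (key_same a b g K C0 x); auto; try lra. nra.
Qed.

Lemma holder a b g K C0 xi eta : a < b -> 1 < g -> 0 < C0 -> b - a < 1 -> SD a b g K C0 ->
  continuous_on_Icc a b K -> Icc a b xi -> Icc a b eta ->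
  Rabs (Gf a b K xi - Gf a b K eta) <= C0 * Pg g (Rabs (xi - eta)).
Proof.
  intros Hab Hg HC Hba H HK Hxi Heta.
  assert (Ht1 : Rabs (xi - eta) < 1) by (unfold Icc in *; apply Rabs_def1; lra).
  destruct (Req_dec xi eta) as [E|Hne].
  - subst. unfold Rminus. rewrite !Rplus_opp_r, !Rabs_R0.
    apply Rmult_le_pos; [lra|]. apply Pg_nonneg; auto. lra.
  - set (t := eta - xi).
    assert (Ht : t <> 0) by (unfold t; lra).
    assert (H1 := key_all a b g K C0 xi t Hab Hg HC Hba H HK Hxi ltac:(unfold t; replace (xi + (eta - xi)) with eta by ring; auto) Ht).
    assert (H2 := key_all a b g K C0 eta (- t) Hab Hg HC Hba H HK Heta ltac:(unfold t; replace (eta + - (eta - xi)) with xi by ring; auto) ltac:(lra)).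
    replace (xi + t) with eta in H1 by (unfold t; ring).
    replace (eta + - t) with xi in H2 by (unfold t; ring).
    rewrite Rabs_Ropp in H2.
    replace (Rabs (xi - eta)) with (Rabs t) by (unfold t; apply Rabs_minus_sym).
    assert (Hat : 0 < Rabs t) by (apply Rabs_pos_lt; auto).
    assert (E : t * (Gf a b K xi - Gf a b K eta) =
      - (K eta - K xi - t * Gf a b K xi) - (K xi - K eta - - t * Gf a b K eta)) by ring.
    assert (Hb : Rabs t * Rabs (Gf a b K xi - Gf a b K eta) <= Rabs t * (C0 * Pg g (Rabs t))).
    { rewrite <- Rabs_mult, E.
      eapply Rle_trans; [apply Rabs_sub_le|]. rewrite Rabs_Ropp. lra. }
    apply Rmult_le_reg_l in Hb; auto.
Qed.

Theorem theorem2p3 (a b gamma : R) (K : R -> R) :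
  a < b -> b - a < 1 -> 1 < gamma ->
  continuous_on_Icc a b K ->
  (exists C0 : R, 0 < C0 /\
     forall tau xi : R, 0 <= tau <= (b - a) / 2 ->
       Icc a b (xi + tau) -> Icc a b (xi - tau) ->
       Rabs (K (xi + tau) + K (xi - tau) - 2 * K xi) <= C0 * tau * Zg gamma tau) ->
  exists K' : R -> R,
    (forall x, Icc a b x -> has_derive_on_Icc a b K x (K' x)) /\
    continuous_on_Icc a b K' /\
    (exists C : R, 0 < C /\
       forall xi eta : R, Icc a b xi -> Icc a b eta ->
         Rabs (K' xi - K' eta) <= C * Pg gamma (Rabs (xi - eta))).
Proof.
  intros Hab Hba Hg HK [C0 [HC HSD]].
  assert (H : SD a b gamma K C0) by exact HSD.
  exists (Gf a b K). split; [|split].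
  - intros x Hx. unfold has_derive_on_Icc. apply filterlim_locally. intros eps.
    destruct (P_small gamma Hg (eps / C0) ltac:(apply Rdiv_lt_0_compat; [apply cond_pos|lra]))
      as [d [Hd HP]].
    exists (mkposreal d ltac:(lra)). intros y Hy [HyI Hyx].
    unfold ball in *; simpl in *; unfold AbsRing_ball, abs, minus, plus, opp in *; simpl in *.
    set (t := y - x) in *. assert (Hyt : Rabs t < d) by exact Hy.
    assert (Ht : t <> 0) by (unfold t; lra).
    assert (Hk := key_all a b gamma K C0 x t Hab Hg HC Hba H HK Hx
                  ltac:(unfold t; replace (x + (y - x)) with y by ring; auto) Ht).
    replace (x + t) with y in Hk by (unfold t; ring).
    assert (Hat : 0 < Rabs t) by (apply Rabs_pos_lt; auto).
    assert (E : (K y - K x) / t + - Gf a b K x = (K y - K x - t * Gf a b K x) / t) by (field; auto).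
    rewrite E. unfold Rdiv. rewrite Rabs_mult, Rabs_inv.
    apply Rmult_lt_reg_r with (Rabs t); auto.
    rewrite Rmult_assoc, Rinv_l, Rmult_1_r by lra.
    assert (Pg gamma (Rabs t) < eps / C0) by (apply HP; split; auto).
    assert (C0 * Pg gamma (Rabs t) < eps).
    { apply Rmult_lt_reg_r with (/ C0). apply Rinv_0_lt_compat; lra.
      replace (C0 * Pg gamma (Rabs t) * / C0) with (Pg gamma (Rabs t)) by (field; lra). exact H0. }
    assert (0 <= Pg gamma (Rabs t)) by (apply Pg_nonneg; auto; split; [apply Rabs_pos|lra]).
    pose proof (cond_pos eps). nra.
  - intros x Hx. apply filterlim_locally. intros eps.
    destruct (P_small gamma Hg (eps / C0) ltac:(apply Rdiv_lt_0_compat; [apply cond_pos|lra]))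
      as [d [Hd HP]].
    exists (mkposreal d ltac:(lra)). intros y Hy HyI.
    unfold ball in *; simpl in *; unfold AbsRing_ball, abs, minus, plus, opp in *; simpl in *.
    pose proof (holder a b gamma K C0 y x Hab Hg HC Hba H HK HyI Hx) as Hh.
    pose proof (cond_pos eps).
    destruct (Req_dec y x) as [E|Hne].
    + subst. unfold Rminus in *. rewrite Rplus_opp_r, Rabs_R0. lra.
    + assert (0 < Rabs (y + - x)) by (apply Rabs_pos_lt; lra).
      assert (Pg gamma (Rabs (y - x)) < eps / C0) by (apply HP; split; auto).
      assert (C0 * Pg gamma (Rabs (y - x)) < eps).
      { apply Rmult_lt_reg_r with (/ C0). apply Rinv_0_lt_compat; lra.
        replace (C0 * Pg gamma (Rabs (y - x)) * / C0) with (Pg gamma (Rabs (y - x))) by (field; lra). auto. }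
      unfold Rminus in *. lra.
  - exists C0. split; auto. intros xi eta Hxi Heta.
    apply (holder a b gamma K C0); auto.
Qed.
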